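(* Suppose the queries are chosen by GP-TS-SDF, i.e., $x_t\in\arg\max_{x\in\mathcal{Q}}f_t(x)$ where $f_t\sim\mathcal{GP}(\mu_{t-1}(\cdot),\nu_t^2\sigma^2_{t-1}(\cdot))$ given $\mathcal{F}_{t-1}$. For any filtration $\mathcal{F}_{t-1}$, conditioned on the event $E^f(t)$, $$\mathbb{P}\left(x_t\in\mathcal{Q}\setminus S_t\mid\mathcal{F}_{t-1}\right)\ge p-1/t^2,\qquad p=\frac{1}{4e\sqrt{\pi}}.$$
   Context: Setting. Let $\mathcal{Q}\subset\mathbb{R}^n$ be finite, $k$ a positive semidefinite kernel on $\mathcal{Q}$ with $k\le1$, and $f$ in the RKHS of $k$ with $\|f\|_k\le\mathcal{B}_f$; $x^\star\in\arg\max_{x\in\mathcal{Q}}f(x)$ and $\Delta(x)=f(x^\star)-f(x)$. Queries $x_1,x_2,\ldots$ are selected sequentially; feedback $y_t=f(x_t)+\epsilon_t$ with $R$-sub-Gaussian $\epsilon_t$ and $|y_t|\le\mathcal{B}_y$, observed after a random delay $d_t\in\{0,1,\ldots\}$ drawn from $\mathcal{D}$. For an integer $m\ge1$, $\rho_m=\mathbb{P}(d_s\le m)$, censored feedback $\tilde y_{s,t}=y_s\mathbb{1}\{d_s\le\min(m,t-s)\}$. With $\lambda>0$: $\mu_{t-1}(x)=\mathbf{k}_{t-1}(x)^\top(\mathbf{K}_{t-1}+\lambda I)^{-1}\tilde{\mathbf{y}}_{t-1}$, $\sigma^2_{t-1}(x,x')=k(x,x')-\mathbf{k}_{t-1}(x)^\top(\mathbf{K}_{t-1}+\lambda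 I)^{-1}\mathbf{k}_{t-1}(x')$, $\sigma^2_{t-1}(x)=\sigma^2_{t-1}(x,x)$, $\mathbf{k}_{t-1}(x)=(k(x,x_i))_{i\le t-1}$, $\mathbf{K}_{t-1}=(k(x_i,x_j))_{i,j\le t-1}$, $\tilde{\mathbf{y}}_{t-1}=(\tilde y_{s,t})_{s\le t-1}$. $\gamma_t=\max_A\frac12\log\det(I+\lambda^{-1}\mathbf{K}_A)$ over collections of $t$ points. For $\delta\in(0,1)$: $\beta_t=\mathcal{B}_f+(R+\mathcal{B}_y)\sqrt{2(\gamma_{t-1}+1+\log(4/\delta))}$, $\nu_t=\mathcal{B}_y\sum_{s=t-m}^{t-1}\sigma_{t-1}(x_s)+\beta_t$ (terms with $s<1$ omitted), $c_t=\nu_t(1+\sqrt{2\log(|\mathcal{Q}|t^2)})$. $\mathcal{F}_{t-1}$: history up to iteration $t-1$. $E^f(t)$: the event that $|\mu_{t-1}(x)-\rho_mf(x)|\le\nu_t\sigma_{t-1}(x)$ for all $x\in\mathcal{Q}$. Saturated set: $S_t=\{x\in\mathcal{Q}:\rho_m\Delta(x)>c_t\sigma_{t-1}(x)\}$. *)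

(* Defs.v *)
From HB Require Import structures.
From mathcomp Require Import all_boot all_order all_algebra.
From mathcomp Require Import all_classical all_reals all_analysis.
From mathcomp Require Import normal_distribution.
Set Implicit Arguments. Unset Strict Implicit. Unset Printing Implicit Defensive.
Import Order.TTheory GRing.Theory Num.Theory numFieldTopology.Exports.
Local Open Scope classical_set_scope.
Local Open Scope ring_scope.

Definition kernel_psd (R : realType) (Q : finType) (k : Q -> Q -> R) : Prop :=
  (forall x x', k x x' = k x' x) /\
  (forall a : Q -> R, 0 <= \sum_(x : Q) \sum_(y : Q) a x * a y * k x y).

(* f belongs to the RKHS of k with ||f||_k <= B.  On a finite set the RKHS is
   span{k(.,y)} and the norm of f = sum_y a_y k(.,y) is sqrt(a^T K a)
   (independent of the representation a). *)
Definition in_rkhs_ball (R : realType) (Q : finType) (k : Q -> Q -> R)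
    (f : Q -> R) (B : R) : Prop :=
  0 <= B /\
  exists a : Q -> R, (forall x, f x = \sum_(y : Q) a y * k x y) /\
    \sum_(x : Q) \sum_(y : Q) a x * a y * k x y <= B ^+ 2.

(* queries are x_1, x_2, ...; row i : 'I_(t-1) corresponds to s = i+1 *)

Definition Kmat (R : realType) (Q : finType) (k : Q -> Q -> R) (xs : nat -> Q)
    (N : nat) : 'M[R]_N :=
  \matrix_(i < N, j < N) k (xs i.+1) (xs j.+1).

Definition kvec (R : realType) (Q : finType) (k : Q -> Q -> R) (xs : nat -> Q)
    (N : nat) (x : Q) : 'cV[R]_N :=
  \col_(i < N) k (xs i.+1) x.

(* censored feedback vector (y~_{s,t})_{s <= t-1},
   y~_{s,t} = y_s 1{d_s <= min(m, t-s)} *)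
Definition ytil (R : realType) (ys : nat -> R) (ds : nat -> nat) (m t : nat)
    : 'cV[R]_(t.-1) :=
  \col_(i < t.-1) (if (ds i.+1 <= minn m (t - i.+1))%N then ys i.+1 else 0).

Definition post_mean (R : realType) (Q : finType) (k : Q -> Q -> R) (lam : R)
    (xs : nat -> Q) (ys : nat -> R) (ds : nat -> nat) (m t : nat) (x : Q) : R :=
  ((kvec k xs t.-1 x)^T *m invmx (Kmat k xs t.-1 + lam%:M) *m ytil ys ds m t)
    ord0 ord0.

Definition post_cov (R : realType) (Q : finType) (k : Q -> Q -> R) (lam : R)
    (xs : nat -> Q) (t : nat) (x x' : Q) : R :=
  k x x' - ((kvec k xs t.-1 x)^T *m invmx (Kmat k xs t.-1 + lam%:M)
              *m kvec k xs t.-1 x') ord0 ord0.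

Definition post_sd (R : realType) (Q : finType) (k : Q -> Q -> R) (lam : R)
    (xs : nat -> Q) (t : nat) (x : Q) : R :=
  Num.sqrt (post_cov k lam xs t x x).

Definition info_gain (R : realType) (Q : finType) (k : Q -> Q -> R) (lam : R)
    (N : nat) : R :=
  \big[Num.max/0]_(A : {ffun 'I_N -> Q})
     (ln (\det (1%:M + lam^-1 *: \matrix_(i < N, j < N) k (A i) (A j))) / 2).

Definition beta_t (R : realType) (Q : finType) (k : Q -> Q -> R) (lam : R)
    (Bf Rn By delta : R) (t : nat) : R :=
  Bf + (Rn + By) *
       Num.sqrt (2 * (info_gain k lam t.-1 + 1 + ln (4 / delta))).

Definition nu_t (R : realType) (Q : finType) (k : Q -> Q -> R) (lam : R)
    (Bf Rn By delta : R) (xs : nat -> Q) (m t : nat) : R :=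
  By * (\sum_(t - m <= s < t | (0 < s)%N) post_sd k lam xs t (xs s))
  + beta_t k lam Bf Rn By delta t.

Definition c_t (R : realType) (Q : finType) (k : Q -> Q -> R) (lam : R)
    (Bf Rn By delta : R) (xs : nat -> Q) (m t : nat) : R :=
  nu_t k lam Bf Rn By delta xs m t *
  (1 + Num.sqrt (2 * ln (#|Q|%:R * (t%:R) ^+ 2))).

Definition is_pmf (R : realType) (D : nat -> R) : Prop :=
  (forall i, 0 <= D i) /\ series D n @[n --> \oo] --> (1 : R).

Definition rho (R : realType) (D : nat -> R) (m : nat) : R :=
  \sum_(i < m.+1) D i.

Definition Ef_event (R : realType) (Q : finType) (k : Q -> Q -> R) (lam : R)
    (Bf Rn By delta : R) (f : Q -> R) (D : nat -> R)
    (xs : nat -> Q) (ys : nat -> R) (ds : nat -> nat) (m t : nat) : Prop :=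
  forall x : Q, `|post_mean k lam xs ys ds m t x - rho D m * f x|
                <= nu_t k lam Bf Rn By delta xs m t * post_sd k lam xs t x.

Definition saturated (R : realType) (Q : finType) (k : Q -> Q -> R) (lam : R)
    (Bf Rn By delta : R) (f : Q -> R) (xstar : Q) (D : nat -> R)
    (xs : nat -> Q) (m t : nat) : set Q :=
  [set x | rho D m * (f xstar - f x)
           > c_t k lam Bf Rn By delta xs m t * post_sd k lam xs t x].

Definition normal_law (R : realType) (mean var : R) (A : set R) : \bar R :=
  if var == 0 then dirac mean A else normal_prob mean (Num.sqrt var) A.

Definition gaussian_field (R : realType) (Q : finType) (d : measure_display)
    (T : measurableType d) (P : probability T R) (g : Q -> T -> R)
    (mean : Q -> R) (cov : Q -> Q -> R) : Prop :=
  (forall x, measurable_fun setT (g x)) /\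
  forall (a : Q -> R) (A : set R), measurable A ->
    P ((fun w => \sum_(x : Q) a x * g x w) @^-1` A) =
    normal_law (\sum_(x : Q) a x * mean x)
               (\sum_(x : Q) \sum_(y : Q) a x * a y * cov x y) A.

Definition p_const (R : realType) : R := (4 * expR 1 * Num.sqrt pi)^-1.

(* Main.v *)
Require Import Defs.
From HB Require Import structures.
From mathcomp Require Import all_boot all_order all_algebra.
From mathcomp Require Import all_classical all_reals all_analysis.
From mathcomp Require Import normal_distribution measurable_realfun.
From mathcomp Require Import ring lra.
Set Implicit Arguments. Unset Strict Implicit. Unset Printing Implicit Defensive.
Import Order.TTheory GRing.Theory Num.Theory numFieldTopology.Exports.
Local Open Scope classical_set_scope.
Local Open Scope ring_scope.

Section G.
Variable R : realType.

Lemma G2 (m s L : R) : 0 < s -> 0 <= L ->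
  (normal_prob m s (`](m + L * s)%R, +oo[%classic) <= (expR (- (L ^+ 2) / 2))%:E)%E.
Proof.
move=> s0 L0.
have sn0 : s != 0 by rewrite gt_eqF.
rewrite /normal_prob.
apply: (@le_trans _ _ (\int[lebesgue_measure]_(x in (`](m + L * s)%R, +oo[%classic : set R))
   ((expR (- (L ^+ 2) / 2))%:E * (normal_pdf (m + L * s) s x)%:E))%E).
  apply: ge0_le_integral => //.
  - by move=> x _; rewrite lee_fin normal_pdf_ge0.
  - apply/measurable_EFinP; apply: measurable_funTS; exact: measurable_normal_pdf.
  - apply/measurable_EFinP; apply: measurable_funTS.
    apply: measurable_funM => //; exact: measurable_normal_pdf.
  move=> x /=; rewrite in_itv /= andbT => hx.
  rewrite -EFinM lee_fin !normal_pdfE // /normal_fun.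
  rewrite mulrCA -expRD ler_wpM2l ?normal_peak_ge0 // ler_expR.
  have key : 0 <= (x - m) ^+ 2 - (x - (m + L * s)) ^+ 2 - L ^+ 2 * s ^+ 2.
    have -> : (x - m) ^+ 2 - (x - (m + L * s)) ^+ 2 - L ^+ 2 * s ^+ 2 =
      2 * (L * s) * (x - (m + L * s)) by ring.
    by rewrite !mulr_ge0 // ?subr_ge0 ?(ltW hx) // ltW.
  rewrite -subr_ge0.
  have -> : - L ^+ 2 / 2 + - (x - (m + L * s)) ^+ 2 / (s ^+ 2 *+ 2) -
     - (x - m) ^+ 2 / (s ^+ 2 *+ 2) =
     ((x - m) ^+ 2 - (x - (m + L * s)) ^+ 2 - L ^+ 2 * s ^+ 2) / (s ^+ 2 *+ 2).
    by field.
  by rewrite mulr_ge0 // invr_ge0 mulrn_wge0 // sqr_ge0.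
rewrite ge0_integralZl //; try (by rewrite lee_fin expR_ge0); try (by move=> x _; rewrite lee_fin normal_pdf_ge0); try (apply/measurable_EFinP; apply: measurable_funTS; exact: measurable_normal_pdf).
rewrite -[X in (_ <= X)%E]mule1; apply: lee_wpmul2l; first by rewrite lee_fin expR_ge0.
rewrite -(integral_normal_pdf (m + L * s) s); apply: ge0_subset_integral => //.
- apply/measurable_EFinP; exact: measurable_normal_pdf.
- by move=> x _; rewrite lee_fin normal_pdf_ge0.
Qed.

Lemma G1 (m s : R) : 0 < s ->
  ((4 * expR 1 * Num.sqrt pi)^-1%:E <= normal_prob m s (`[(m + s)%R, +oo[%classic))%E.
Proof.
move=> s0.
have sn0 : s != 0 by rewrite gt_eqF.
set c := normal_peak s * expR (- (9/8)).
have mI : measurable (`[(m + s)%R, (m + s * (3/2))%R]%classic : set R).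
  exact: measurable_itv.
apply: (@le_trans _ _ (\int[lebesgue_measure]_(x in `[(m + s)%R, (m + s * (3/2))%R]%classic)
   (cst c%:E) x)%E).
  rewrite integral_cst //. have hI := (@lebesgue_measure_itv R `[(m + s)%R, (m + s * (3/2))%R]). rewrite /= in hI. rewrite /= hI /= lte_fin ltrD2l.
  rewrite ifT; last by rewrite ltr_pMr // ; lra.
  rewrite -EFinD -EFinM lee_fin /c /normal_peak.
  have sp0 : 0 < Num.sqrt (pi : R). rewrite sqrtr_gt0. exact: pi_gt0.
  have s20 : 0 < Num.sqrt (2 : R) by rewrite sqrtr_gt0; lra.
  have s22 : Num.sqrt (2 : R) ^+ 2 = 2 by rewrite sqr_sqrtr //; lra.
  have s2le : Num.sqrt (2 : R) <= 3/2 by nra.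
  have hs : Num.sqrt (s ^+ 2 * pi *+ 2) = s * (Num.sqrt pi * Num.sqrt 2).
    rewrite -mulr_natr -mulrA sqrtrM ?sqr_ge0 // sqrtr_sqr ger0_norm ?(ltW s0) //.
    by rewrite sqrtrM // pi_ge0.
  rewrite hs.
  have E0 : 0 < expR (1 : R) := expR_gt0 1.
  have F78 : 7/8 <= expR (- (1/8) : R).
    by apply: le_trans (expR_ge1Dx _); lra.
  have -> : expR (- (9/8) : R) = (expR 1)^-1 * expR (- (1/8)).
    by rewrite -expRN -expRD; congr expR; lra.
  have -> : (s * (Num.sqrt pi * Num.sqrt 2))^-1 * ((expR 1)^-1 * expR (- (1 / 8))) *
     (m + s * (3 / 2) - (m + s)) =
     (4 * expR 1 * Num.sqrt pi)^-1 * (2 * expR (- (1 / 8)) / Num.sqrt 2).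
    by field; rewrite ?gt_eqF.
  rewrite -[X in X <= _]mulr1 ler_wpM2l ?invr_ge0 ?mulr_ge0 ?ltW //.
  by rewrite ltr_pdivlMr //; lra.
apply: (@le_trans _ _ (\int[lebesgue_measure]_(x in `[(m + s)%R, (m + s * (3/2))%R]%classic)
   (normal_pdf m s x)%:E)%E).
  apply: ge0_le_integral => //.
  - by move=> x _; rewrite lee_fin /c mulr_ge0 ?normal_peak_ge0 ?expR_ge0.
  - apply/measurable_EFinP; apply: measurable_funTS; exact: measurable_normal_pdf.
  move=> x /=; rewrite in_itv /= => /andP[h1 h2].
  rewrite lee_fin normal_pdfE // /c ler_wpM2l ?normal_peak_ge0 // /normal_fun ler_expR.
  have h3 : (x - m) ^+ 2 <= (s * (3/2)) ^+ 2.
    rewrite ler_sqr ?nnegrE; lra.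
  rewrite mulNr lerN2 ler_pdivrMr ?mulrn_wgt0 ?exprn_gt0 //.
  by move: h3; rewrite exprMn; lra.
apply: ge0_subset_integral => //.
- apply/measurable_EFinP; apply: measurable_funTS; exact: measurable_normal_pdf.
- by move=> x _; rewrite lee_fin normal_pdf_ge0.
- by move=> x /=; rewrite !in_itv /= andbT => /andP[].
Qed.

End G.
Section L.
Variables (R : realType) (Q : finType) (d : measure_display) (T : measurableType d)
  (P : probability T R).

Lemma gf_scale (g : Q -> T -> R) mean cov : gaussian_field P g mean cov ->
  forall x c A, measurable A ->
  P ((fun w => c * g x w) @^-1` A) = normal_law (c * mean x) (c * c * cov x x) A.
Proof.
move=> [_ H] x c A mA; have := H (fun y => if y == x then c else 0) A mA.
have e1 : (fun w => \sum_y (if y == x then c else 0) * g y w) = (fun w => c * g x w).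
  apply/funext => w; rewrite (bigD1 x) //= eqxx big1 ?addr0 // => y /negbTE ->.
  by rewrite mul0r.
rewrite e1 => ->; congr normal_law.
  rewrite (bigD1 x) //= eqxx big1 ?addr0 // => y /negbTE ->.
  by rewrite mul0r.
rewrite (bigD1 x) //= [X in _ + X]big1 ?addr0; last first.
  by move=> y /negbTE yx; rewrite big1 // => z _; rewrite yx !mul0r.
rewrite (bigD1 x) //= eqxx big1 ?addr0 // => y /negbTE ->.
by rewrite mulr0 mul0r.
Qed.

Lemma gf_var_ge0 (g : Q -> T -> R) mean cov : gaussian_field P g mean cov ->
  forall x, 0 <= cov x x.
Proof.
move=> gf x; rewrite leNgt; apply/negP => hneg.
have law0 : forall (m v : R) (A : set R), measurable A -> v < 0 ->
    normal_law m v A = lebesgue_measure (`[0%R, 1%R]%classic `&` A).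
  move=> m v A mA v0; rewrite /normal_law ifF ?lt_eqF // ler0_sqrtr ?ltW //.
  rewrite /normal_prob /normal_pdf eqxx integral_indic //.
have h1 := gf_scale gf x 1 (measurable_itv `[0%R, (1/2)%R]).
have h2 := gf_scale gf x 2 (measurable_itv `[0%R, 1%R]).
rewrite law0 in h1; last 2 first.
- exact: measurable_itv.
- by rewrite !mul1r.
rewrite law0 in h2; last 2 first.
- exact: measurable_itv.
- by rewrite pmulr_rlt0 //; lra.
have e : (fun w => 1 * g x w) @^-1` `[0%R, (1/2)%R] = (fun w => 2 * g x w) @^-1` `[0%R, 1%R].
  apply/seteqP; split => w /=; rewrite !in_itv /= mul1r => /andP[a b];
  apply/andP; split; lra.
rewrite e h2 setIid in h1.
have : (lebesgue_measure (`[0%R, 1%R]%classic `&` `[0%R, (1/2)%R]%classic)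
   <= lebesgue_measure (`[0%R, (1/2)%R]%classic : set R))%E.
  apply: le_measure; rewrite ?inE.
  - by apply: measurableI; exact: measurable_itv.
  - exact: measurable_itv.
  - exact: subIsetr.
rewrite -h1 !lebesgue_measure_itv /= !lte_fin ifT; last lra.
rewrite ifT; last lra.
rewrite -!EFinD lee_fin; lra.
Qed.
End L.

Section NL.
Variable R : realType.

Lemma NL1 (m v : R) : 0 <= v ->
  ((p_const R)%:E <= normal_law m v (`[(m + Num.sqrt v)%R, +oo[%classic))%E.
Proof.
move=> v0; rewrite /normal_law /p_const; case: eqP => [->|/eqP vn0].
  rewrite diracE sqrtr0 addr0 (_ : m \in _ = true); last first.
    by apply/mem_set; rewrite /= in_itv /= lexx.
  have e2 : 2 <= expR (1 : R) by have := expR_ge1Dx (1 : R); lra.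
  have sp1 : 1 <= Num.sqrt (pi : R).
    by rewrite -sqrtr1 ler_sqrt ?pi_ge0 //; have := @pi_ge2 R; lra.
  rewrite lee_fin invf_le1; last by rewrite !mulr_gt0 //; lra.
  nra.
apply: G1; rewrite sqrtr_gt0 lt_neqAle eq_sym vn0 //.
Qed.

Lemma NL2 (m v L : R) : 0 <= v -> 0 <= L ->
  (normal_law m v (`](m + L * Num.sqrt v)%R, +oo[%classic) <= (expR (- (L ^+ 2) / 2))%:E)%E.
Proof.
move=> v0 L0; rewrite /normal_law; case: eqP => [->|/eqP vn0].
  rewrite diracE sqrtr0 mulr0 addr0 (_ : m \in _ = false); last first.
    by apply/negbTE/negP; rewrite inE /= in_itv /= ltxx.
  by rewrite lee_fin expR_ge0.
apply: G2 => //; rewrite sqrtr_gt0 lt_neqAle eq_sym vn0 //.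
Qed.

End NL.

Section UB.
Variables (R : realType) (I : eqType) (d : measure_display) (T : measurableType d)
  (P : probability T R).

Lemma union_bound (r : seq I) (B : I -> set T) : (forall x, measurable (B x)) ->
  (P (\big[setU/set0]_(x <- r) B x) <= \sum_(x <- r) P (B x))%E.
Proof.
move=> mB; elim: r => [|a r IH]; first by rewrite !big_nil measure0.
rewrite !big_cons; apply: le_trans (measureU2 _ _ _) _ => //.
  by apply: bigsetU_measurable.
exact: leeD.
Qed.

Lemma mem_bigU (r : seq I) (B : I -> set T) x : x \in r ->
  B x `<=` \big[setU/set0]_(i <- r) B i.
Proof.
elim: r => [//|a r IH]; rewrite in_cons big_cons => /orP[/eqP ->|h] w hw.
  by left.
by right; apply: IH.
Qed.
End UB.

Unset Implicit Arguments.

Theorem lemma4 (R : realType) (Q : finType) (k : Q -> Q -> R) (f : Q -> R)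
    (xstar : Q) (Bf Rn By lam delta : R) (D : nat -> R) (m t : nat)
    (xs : nat -> Q) (ys : nat -> R) (ds : nat -> nat)
    (d : measure_display) (T : measurableType d) (P : probability T R)
    (ft : Q -> T -> R) (xt : T -> Q) :
  kernel_psd k ->
  (forall x x', k x x' <= 1) ->
  in_rkhs_ball k f Bf ->
  (forall x, f x <= f xstar) ->
  0 <= Rn -> 0 <= By ->
  (forall s, (1 <= s < t)%N -> `|ys s| <= By) ->
  is_pmf D -> (1 <= m)%N ->
  0 < lam -> 0 < delta < 1 ->
  (1 <= t)%N ->
  (* conditioning on the event E^f(t) *)
  Ef_event k lam Bf Rn By delta f D xs ys ds m t ->
  (* given F_{t-1}: f_t ~ GP(mu_{t-1}, nu_t^2 sigma^2_{t-1}) *)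
  gaussian_field P ft (post_mean k lam xs ys ds m t)
    (fun x x' => nu_t k lam Bf Rn By delta xs m t ^+ 2 * post_cov k lam xs t x x') ->
  (* x_t in argmax_x f_t(x), selected measurably *)
  (forall w y, ft y w <= ft (xt w) w) ->
  (forall q : Q, measurable [set w | xt w = q]) ->
  ((p_const R - (t%:R ^+ 2)^-1)%:E
     <= P [set w | ~ saturated k lam Bf Rn By delta f xstar D xs m t (xt w)])%E.
Proof.
move=> kpsd k1 frk fmax Rn0 By0 yb pmf m1 lam0 del01 t1 Ef gf argm mxt.
set mu := post_mean k lam xs ys ds m t.
set nu := nu_t k lam Bf Rn By delta xs m t.
set sd := post_sd k lam xs t.
set rh := rho D m.
pose L : R := Num.sqrt (2 * ln (#|Q|%:R * t%:R ^+ 2)).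
set v := fun x => nu ^+ 2 * post_cov k lam xs t x x.
have Bf0 : 0 <= Bf by case: frk.
have nu0 : 0 <= nu.
  rewrite /nu /nu_t addr_ge0 ?mulr_ge0 //.
    by apply: sumr_ge0 => i _; exact: sqrtr_ge0.
  by rewrite /beta_t addr_ge0 // mulr_ge0 ?addr_ge0 ?sqrtr_ge0.
have v0 : forall x, 0 <= v x.
  by move=> x; apply: (gf_var_ge0 gf x).
have sv : forall x, Num.sqrt (v x) = nu * sd x.
  by move=> x; rewrite /v sqrtrM ?sqr_ge0 // sqrtr_sqr ger0_norm.
have Qpos : (0 < #|Q|)%N by apply/card_gt0P; exists xstar.
have a1 : 1 <= #|Q|%:R * t%:R ^+ 2 :> R.
  by rewrite -natrX -natrM ler1n muln_gt0 Qpos expn_gt0 /= t1.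
have L0 : 0 <= L by exact: sqrtr_ge0.
have law : forall x A, measurable A -> P (ft x @^-1` A) = normal_law (mu x) (v x) A.
  move=> x A mA; have := gf_scale gf x 1 mA; rewrite !mul1r.
  by have -> : (fun w => 1 * ft x w) = ft x by apply/funext => w; rewrite mul1r.
have mpre : forall x Y, measurable Y -> measurable (ft x @^-1` Y).
  move=> x Y mY; rewrite -[_ @^-1` _]setTI; exact: (gf.1 x) measurableT Y mY.
set A := ft xstar @^-1` `[(mu xstar + Num.sqrt (v xstar))%R, +oo[%classic.
set B := fun x => ft x @^-1` `](mu x + L * Num.sqrt (v x))%R, +oo[%classic.
set N := [set w | ~ saturated k lam Bf Rn By delta f xstar D xs m t (xt w)].
have mA : measurable A by apply: mpre; exact: measurable_itv.
have mB : forall x, measurable (B x) by move=> x; apply: mpre; exact: measurable_itv.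
have mN : measurable N.
  have -> : N = \bigcup_(q in [set q | ~ saturated k lam Bf Rn By delta f xstar D xs m t q])
      [set w | xt w = q].
    apply/seteqP; split => w /=; first by move=> h; exists (xt w).
    by case=> q hq /= eq; rewrite /N /= eq.
  apply: (@fin_bigcup_measurable _ _ Q); first exact: finite_finset.
  by move=> q _; exact: mxt.
have incl : A `<=` N `|` \big[setU/set0]_(x <- index_enum Q) B x.
  move=> w Aw.
  case: (pselect (saturated k lam Bf Rn By delta f xstar D xs m t (xt w))) => hs; last by left.
  right; apply: (mem_bigU (x := xt w)); first by rewrite mem_index_enum.
  rewrite /B /preimage /= in_itv /= andbT ltNge; apply/negP => hle.
  move: Aw; rewrite /A /preimage /= in_itv /= andbT => hA.
  have h1 := Ef xstar; have h2 := Ef (xt w).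
  rewrite -/mu -/nu -/sd -/rh ler_norml in h1.
  rewrite -/mu -/nu -/sd -/rh ler_norml in h2.
  move/andP: h1 => [h1 _]; move/andP: h2 => [_ h2].
  have h3 := argm w xstar.
  move: hs; rewrite /saturated /= -/rh -/sd.
  have -> : c_t k lam Bf Rn By delta xs m t * sd (xt w) =
     nu * sd (xt w) + L * (nu * sd (xt w)) by rewrite /c_t -/nu -/L; ring.
  move: hA hle; rewrite !sv => hA hle hs.
  have e : rh * (f xstar - f (xt w)) = rh * f xstar - rh * f (xt w) by ring.
  move: hs; rewrite e => hs.
  lra.
have hA : ((p_const R)%:E <= P A)%E.
  rewrite /A law; [exact: NL1 | exact: measurable_itv].
have hB : forall x, (P (B x) <= ((#|Q|%:R * t%:R ^+ 2)^-1)%:E)%E.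
  move=> x; rewrite /B law; last exact: measurable_itv.
  apply: le_trans (NL2 _ _ _) _ => //.
  rewrite lee_fin /L sqr_sqrtr; last by rewrite mulr_ge0 // ln_ge0.
  rewrite mulNr mulrC mulKf // expRN lnK // posrE; lra.
have hU := union_bound P (index_enum Q) mB.
have hS : (\sum_(x <- index_enum Q) P (B x) <= ((t%:R ^+ 2)^-1)%:E)%E.
  apply: (@le_trans _ _ (\sum_(x <- index_enum Q) ((#|Q|%:R * t%:R ^+ 2)^-1)%:E)%E).
    by apply: lee_sum => x _; exact: hB.
  rewrite sumEFin lee_fin.
  rewrite sumr_const (_ : #|xpredT| = #|Q|) // -[X in X <= _]mulr_natl invfM mulrA mulfV ?mul1r //.
  by rewrite pnatr_eq0 -lt0n.
have hAN : (P A <= P N + P (\big[setU/set0]_(x <- index_enum Q) B x))%E.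
  have mU : measurable (\big[setU/set0]_(x <- index_enum Q) B x).
    by apply: bigsetU_measurable => x _; exact: mB.
  apply: le_trans (measureU2 _ mN mU).
  apply: le_measure; rewrite ?inE //.
  exact: measurableU.
have PN0 : (0 <= P N)%E := measure_ge0 _ _.
have PN1 : (P N <= 1)%E := probability_le1 _ mN.
have finN : P N \is a fin_num by rewrite ge0_fin_numE // (le_lt_trans PN1) ?ltey.
have := le_trans hA (le_trans hAN (leeD (lexx (P N)) (le_trans hU hS))).
rewrite -(fineK finN) -EFinD !lee_fin; lra.
Qed.
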